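(* Let $m\ge1$ and $0\le r\le m$. Let $\mathcal{G}\subseteq F_{m,r}$ be a linear subspace such that $\pi(\mathcal{G})=\mathcal{G}$ for all $\pi\in Sym(m,r)$. Then $\mathcal{G}=\{0\}$ or $\mathcal{G}=F_{m,r}$.
   Context: $F_{m,r}$ is the $\mathbb{F}_2$-vector space with basis the monomials $x_I=\prod_{i\in I}x_i$, $I\subseteq[m]$, $|I|=r$ (homogeneous degree-$r$ multilinear polynomials over $\mathbb{F}_2$ in $x_1,\dots,x_m$). For $A\in GL_m(\mathbb{F}_2)$ and $b\in\mathbb{F}_2^m$, the map $\pi_{A,b}:F_{m,r}\to F_{m,r}$ sends $P$ to the degree-$r$ homogeneous part of the multilinear reduction (using $x_i^2=x_i$) of $P(Ax+b)$. $Sym(m,r)$ is the set of all such maps $\pi_{A,b}$. *)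

(* Defs.v *)
From HB Require Import structures.
From mathcomp Require Import all_boot all_order all_algebra all_fingroup.
Set Implicit Arguments. Unset Strict Implicit. Unset Printing Implicit Defensive.
Import GRing.Theory.
Local Open Scope ring_scope.

(* Multilinear polynomials over F_2 in x_1..x_m: coefficient function on
   monomials x_I, I a subset of 'I_m. *)
Definition mlpoly (m : nat) := {ffun {set 'I_m} -> 'F_2}.

(* product of multilinear polynomials with reduction x_i^2 = x_i :
   x_S * x_T = x_(S :|: T) *)
Definition mlmul m (p q : mlpoly m) : mlpoly m :=
  [ffun U => \sum_(S : {set 'I_m}) \sum_(T : {set 'I_m} | S :|: T == U) p S * q T].

Definition mlone m : mlpoly m := [ffun U => (U == set0)%:R].

Definition linform m (A : 'M['F_2]_m) (b : 'cV['F_2]_m) (i : 'I_m) : mlpoly m :=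
  [ffun U => (U == set0)%:R * b i ord0 + \sum_(j : 'I_m) (U == [set j])%:R * A i j].

(* multilinear reduction of x_I (A x + b) = prod_(i in I) (A x + b)_i *)
Definition monsub m (A : 'M['F_2]_m) (b : 'cV['F_2]_m) (I : {set 'I_m}) : mlpoly m :=
  \big[@mlmul m/mlone m]_(i in I) linform A b i.

(* multilinear reduction of P(A x + b) *)
Definition mlsubst m (A : 'M['F_2]_m) (b : 'cV['F_2]_m) (P : mlpoly m) : mlpoly m :=
  [ffun U => \sum_(I : {set 'I_m}) P I * monsub A b I U].

(* pi_{A,b}: degree-r homogeneous part of the multilinear reduction of P(Ax+b) *)
Definition piAb m (r : nat) (A : 'M['F_2]_m) (b : 'cV['F_2]_m) (P : mlpoly m) : mlpoly m :=
  [ffun U : {set 'I_m} => if #|U| == r then mlsubst A b P U else 0].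

Definition inFmr m r (P : mlpoly m) : bool := [forall U : {set 'I_m}, (#|U| != r) ==> (P U == 0)].

Definition Fmr m r : {set mlpoly m} := [set P | inFmr r P].

(* G is an F_2-linear subspace of F_{m,r} (over F_2 scalars are 0 and 1,
   so this is: contains 0 and closed under addition) *)
Definition subspace_of_Fmr m r (G : {set mlpoly m}) : Prop :=
  [/\ G \subset Fmr m r, 0 \in G & forall P Q, P \in G -> Q \in G -> P + Q \in G].

(* Main.v *)
Require Import Defs.
From mathcomp Require Import all_boot all_order all_algebra all_fingroup.
Set Implicit Arguments. Unset Strict Implicit. Unset Printing Implicit Defensive.
Local Open Scope ring_scope.
Import GRing.Theory.
Lemma F2_addxx (x : 'F_2) : x + x = 0.
Proof. exact: (addrr_pchar2 (pchar_Fp (isT : prime 2))). Qed.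
Lemma F2_neq0 (x : 'F_2) : x != 0 -> x = 1.
Proof. case: x => [[|[|n]]] // Hn H; apply/val_inj => //. Qed.

Section S.
Variable m : nat.
Definition mono (S : {set 'I_m}) : mlpoly m := [ffun U => (U == S)%:R].

Lemma mlmulDl (p q s : mlpoly m) : mlmul (p + q) s = mlmul p s + mlmul q s.
Proof.
apply/ffunP => U; rewrite !ffunE -big_split /=; apply: eq_bigr => S _.
rewrite -big_split /=; apply: eq_bigr => T _; by rewrite ffunE mulrDl.
Qed.

Lemma mlmulDr (p q s : mlpoly m) : mlmul s (p + q) = mlmul s p + mlmul s q.
Proof.
apply/ffunP => U; rewrite !ffunE -big_split /=; apply: eq_bigr => S _.
rewrite -big_split /=; apply: eq_bigr => T _; by rewrite ffunE mulrDr.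
Qed.

Lemma mlmul_mono S T : mlmul (mono S) (mono T) = mono (S :|: T).
Proof.
apply/ffunP => U; rewrite !ffunE (bigD1 S) //= [X in _ + X]big1 => [|S' nS]; last first.
  by rewrite big1 // => T' _; rewrite ffunE (negbTE nS) mul0r.
rewrite addr0 big_mkcond (bigD1 T) //= [X in _ + X]big1 => [|T' nT]; last first.
  by rewrite !ffunE (negbTE nT) mulr0; case: ifP.
by rewrite !ffunE !eqxx mul1r addr0 eq_sym; case: ifP.
Qed.

Lemma mlone_mono : mlone m = mono set0.
Proof. by apply/ffunP => U; rewrite !ffunE. Qed.

Lemma sum_single (U : {set 'I_m}) (a : 'I_m) :
  \sum_(j' : 'I_m) (U == [set j'])%:R * (j' == a)%:R = (U == [set a])%:R :> 'F_2.
Proof.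
rewrite (bigD1 a) //= big1 => [|j' nj]; first by rewrite eqxx mulr1 addr0.
by rewrite (negbTE nj) mulr0.
Qed.

Definition tv (j k : 'I_m) : 'M['F_2]_m := 1%:M + delta_mx j k.

Lemma linform_tv (j k i : 'I_m) :
  linform (tv j k) 0 i = if i == j then mono [set j] + mono [set k] else mono [set i].
Proof.
apply/ffunP => U; rewrite !ffunE mxE mulr0 add0r.
under eq_bigr => j' _ do rewrite !mxE mulrDr.
rewrite big_split /=.
under eq_bigr => j' _ do rewrite [i == j']eq_sym.
rewrite sum_single.
case: (i =P j) => [->|/eqP/negbTE nij]; rewrite !ffunE.
  by rewrite /= sum_single.
by rewrite big1 ?addr0 // => j' _; rewrite /= mulr0.
Qed.

Lemma addpp (p : mlpoly m) : p + p = 0.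
Proof. by apply/ffunP => U; rewrite !ffunE F2_addxx. Qed.

Ltac ssolve j k jk H :=
  apply/setP; let x := fresh "x" in intro x; rewrite !inE;
  case: (eqVneq x j) => [->|?];
  [ rewrite ?eqxx ?(negbTE jk) ?H /=
  | case: (eqVneq x k) => [->|?];
    [ rewrite ?eqxx ?(negbTE jk) ?(eq_sym k j) ?(negbTE jk) ?H /=
    | rewrite ?H /=]];
  (do ?case: (_ \in _)); done.

Definition sw (j k : 'I_m) (S : {set 'I_m}) := S :\ j :|: [set k].

Definition tvres (j k : 'I_m) (S : {set 'I_m}) : mlpoly m :=
  if j \in S then mono S + mono (sw j k S) else mono S.

Lemma monsub_seq (j k : 'I_m) (jk : j != k) (I : {set 'I_m}) (s : seq 'I_m) :
  \big[@mlmul m/mlone m]_(i <- s | i \in I) linform (tv j k) 0 i =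
  tvres j k [set i | (i \in s) && (i \in I)].
Proof.
elim: s => [|a s IH].
  rewrite big_nil mlone_mono /tvres.
  have -> : [set i | (i \in [::]) && (i \in I)] = set0 by apply/setP => x; rewrite !inE.
  by rewrite inE.
rewrite big_cons; case: ifP => aI; last first.
  rewrite IH; congr tvres; apply/setP => x; rewrite !inE.
  by case: (x =P a) => [->|]; rewrite ?aI ?andbF.
rewrite IH linform_tv.
set S' := [set i | (i \in s) && (i \in I)].
have -> : [set i | (i \in a :: s) && (i \in I)] = a |: S'.
  apply/setP => x; rewrite !inE.
  by case: (x =P a) => [->|]; rewrite ?aI ?andbT ?orbT.
rewrite /tvres /sw; clearbody S'.
case: (a =P j) => [->|/eqP naj].
  rewrite setU11; case: ifP => jS.
    rewrite mlmulDl !mlmulDr !mlmul_mono.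
    have -> : [set j] :|: S' = S' by ssolve j k jk jS.
    have -> : [set j] :|: (S' :\ j :|: [set k]) = S' :|: [set k] by ssolve j k jk jS.
    have -> : [set k] :|: S' = S' :|: [set k] by ssolve j k jk jS.
    have -> : [set k] :|: (S' :\ j :|: [set k]) = S' :\ j :|: [set k] by ssolve j k jk jS.
    by rewrite addrA -(addrA (mono S')) addpp addr0.
  rewrite mlmulDl !mlmul_mono.
  have -> : [set k] :|: S' = (j |: S') :\ j :|: [set k] by ssolve j k jk jS.
  by [].
rewrite in_setU1 (eq_sym j a) (negbTE naj) /=.
case: ifP => jS; last by rewrite mlmul_mono.
rewrite mlmulDr !mlmul_mono.
have -> : [set a] :|: (S' :\ j :|: [set k]) = (a |: S') :\ j :|: [set k] => //.
apply/setP => x; rewrite !inE.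
by case: (eqVneq x a) => [->|_]; rewrite ?naj //=.
Qed.

Lemma monsub_tv (j k : 'I_m) (jk : j != k) (I : {set 'I_m}) :
  monsub (tv j k) 0 I = tvres j k I.
Proof.
have H := monsub_seq jk I (index_enum 'I_m).
have E : [set i | (i \in index_enum 'I_m) && (i \in I)] = I.
  by apply/setP => x; rewrite !inE mem_index_enum.
rewrite E in H; exact: H.
Qed.

Lemma sw_inv (a b : 'I_m) (S : {set 'I_m}) :
  a != b -> a \in S -> b \notin S -> sw b a (sw a b S) = S.
Proof.
move=> ab aS bS; apply/setP => x; rewrite /sw !inE.
case: (eqVneq x a) => [->|xa]; first by rewrite orbT aS.
case: (eqVneq x b) => [->|xb] /=; first by rewrite (negbTE bS).
by rewrite ?orbF ?andbT.
Qed.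

Lemma sw_in (a b : 'I_m) (S : {set 'I_m}) : a != b -> (a \notin sw a b S) && (b \in sw a b S).
Proof. by move=> ab; rewrite /sw !inE !eqxx (negbTE ab) /= orbT. Qed.

Lemma card_sw (a b : 'I_m) (S : {set 'I_m}) : a != b -> a \in S -> b \notin S -> #|sw a b S| = #|S|.
Proof.
move=> ab aS bS; rewrite /sw setUC cardsU1 (cardsD1 a S) aS !inE (negbTE bS) andbF.
by [].
Qed.

Definition Tf (j k : 'I_m) (r : nat) (P : mlpoly m) : mlpoly m :=
  [ffun U : {set 'I_m} => if [&& #|U| == r, k \in U & j \notin U] then P (sw k j U) else 0].

Lemma tvres_val (j k : 'I_m) (I U : {set 'I_m}) : tvres j k I U = (U == I)%:R + (j \in I)%:R * (U == sw j k I)%:R.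
Proof. by rewrite /tvres; case: ifP => _; rewrite !ffunE ?mul1r ?mul0r ?addr0. Qed.

Lemma tv_point j k (jk : j != k) r P (HP : inFmr r P) (U : {set 'I_m}) (cU : #|U| = r) (I : {set 'I_m}) :
  P I * ((j \in I)%:R * (U == sw j k I)%:R) =
  if (I == sw k j U) && (k \in U) && (j \notin U) then P I else 0.
Proof.
have kj : k != j by rewrite eq_sym.
case: (boolP (j \in I)) => jI /=; last first.
  rewrite mul0r mulr0; case: ifP => // /andP[/andP[/eqP IU kU] jU].
  by move: jI; rewrite IU; case/andP: (@sw_in k j U kj) => _ ->.
case: (eqVneq U (sw j k I)) => [UE|UE] /=; last first.
  rewrite !mulr0; case: ifP => // /andP[/andP[/eqP IU kU] jU].
  by move: UE; rewrite IU (sw_inv kj kU jU) eqxx.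
rewrite ?mulr1.
case/andP: (@sw_in j k I jk) => jU kU; rewrite -UE in jU kU; rewrite kU jU !andbT.
case: (boolP (k \in I)) => kI; last by rewrite UE sw_inv // eqxx.
have UI : U = I :\ j.
  rewrite UE /sw; apply/setP => x; rewrite !inE.
  by case: (eqVneq x k) => [->|] /=; rewrite ?orbT ?orbF // kj kI.
have : #|I| != r.
  by rewrite -cU UI (cardsD1 j I) jI add1n neq_ltn ltnSn orbT.
move/forallP: HP => /(_ I) /implyP H /H /eqP ->.
by case: ifP.
Qed.

Lemma piAb_tv j k (jk : j != k) r P : inFmr r P -> piAb r (tv j k) 0 P = P + Tf j k r P.
Proof.
move=> HP; apply/ffunP => U; rewrite !ffunE.
case: (eqVneq #|U| r) => [cU|cU] /=; last first.
  by move/forallP: HP => /(_ U); rewrite cU /= => /eqP ->; rewrite addr0.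
under eq_bigr => I _ do rewrite monsub_tv // tvres_val mulrDr.
rewrite big_split /=; congr (_ + _).
  rewrite (bigD1 U) //= eqxx mulr1 big1 ?addr0 // => I nI.
  by rewrite eq_sym (negbTE nI) mulr0.
rewrite (eq_bigr (fun I => if (I == sw k j U) && (k \in U) && (j \notin U) then P I else 0)); last first.
  by move=> I _; exact: (tv_point jk HP cU).
case: ifP => c.
  rewrite (bigD1 (sw k j U)) //= eqxx c big1 ?addr0 // => I nI.
  by rewrite (negbTE nI).
by rewrite big1 // => I _; rewrite -andbA c andbF.
Qed.

Lemma tv_unit (j k : 'I_m) : j != k -> tv j k \in unitmx.
Proof.
move=> jk; have [] := @mulmx1_unit _ _ (tv j k) (tv j k) => //.
rewrite /tv mulmxDl !mulmxDr !mul1mx mulmx1 mul_delta_mx_cond eq_sym (negbTE jk) mulr0n addr0.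
rewrite -addrA.
have -> : delta_mx j k + delta_mx j k = 0 :> 'M['F_2]_m.
  by apply/matrixP => a b; rewrite !mxE F2_addxx.
by rewrite addr0.
Qed.

Definition supp (P : mlpoly m) : {set {set 'I_m}} := [set I | P I != 0].

Lemma in_supp P I : (I \in supp P) = (P I != 0).
Proof. by rewrite inE. Qed.

Lemma diff_ne (A B : {set 'I_m}) : #|A| = #|B| -> A != B -> exists x, x \in A :\: B.
Proof.
move=> cAB nAB; case: (set_0Vmem (A :\: B)) => [H|[x Hx]]; last by exists x.
move/eqP: H; rewrite setD_eq0 => sAB.
by move: nAB; rewrite eqEcard sAB cAB leqnn.
Qed.

Lemma Tf_mono j k r (I : {set 'I_m}) : j != k -> j \in I -> k \notin I -> #|I| = r ->
  Tf j k r (mono I) = mono (sw j k I).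
Proof.
move=> jk jI kI cI; apply/ffunP => U; rewrite !ffunE.
case: (eqVneq U (sw j k I)) => [->|nU].
  case/andP: (@sw_in j k I jk) => -> ->; rewrite card_sw // cI eqxx /=.
  by rewrite sw_inv // eqxx.
case: ifP => // /and3P[_ kU jU]; case: eqP => // E.
by move: nU; rewrite -E sw_inv ?eqxx // eq_sym.
Qed.

Section Main.
Variables (r : nat) (G : {set mlpoly m}).
Hypothesis HG : subspace_of_Fmr r G.
Hypothesis Hsym : forall (A : 'M['F_2]_m) (b : 'cV['F_2]_m), A \in unitmx ->
     [set piAb r A b P | P in G] = G.

Lemma G_Fmr P : P \in G -> inFmr r P.
Proof. by case: HG => /subsetP H _ _ /H; rewrite inE. Qed.

Lemma G_add P Q : P \in G -> Q \in G -> P + Q \in G.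
Proof. by case: HG => _ _; apply. Qed.

Lemma G_Tf j k P : j != k -> P \in G -> Tf j k r P \in G.
Proof.
move=> jk PG.
have H1 : piAb r (tv j k) 0 P \in G by rewrite -(Hsym 0 (tv_unit jk)); apply/imsetP; exists P.
have := G_add H1 PG; rewrite piAb_tv //; last exact: G_Fmr.
by rewrite addrC addrA addpp add0r.
Qed.

Lemma supp_card P I : P \in G -> P I != 0 -> #|I| = r.
Proof.
move=> /G_Fmr /forallP /(_ I) /implyP H PI; apply/eqP.
by apply: contraNT PI => /H /eqP ->.
Qed.

Lemma ex_mono P : P \in G -> P != 0 -> exists I, mono I \in G.
Proof.
move: {2}#|supp P| (leqnn #|supp P|) => n; elim: n P => [|n IH] P Hn PG P0.
  case/negP: P0; apply/eqP/ffunP => U; rewrite ffunE.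
  move: Hn; rewrite leqn0 cards_eq0 => /eqP/setP/(_ U); rewrite in_supp inE.
  by move/negbFE/eqP.
have [I0 I0P] : exists I0, P I0 != 0.
  apply/existsP; apply: contraNT P0 => /existsPn H; apply/eqP/ffunP => U.
  by rewrite ffunE; move: (H U); rewrite negbK => /eqP.
case: (boolP [exists I1, (P I1 != 0) && (I1 != I0)]) => [/existsP[I1 /andP[I1P nI]]|H].
  have c0 := supp_card PG I0P; have c1 := supp_card PG I1P.
  have nI' : I0 != I1 by rewrite eq_sym.
  have [j] := diff_ne (etrans c0 (esym c1)) nI'.
  rewrite inE => /andP[jI1 jI0].
  have [k] := diff_ne (etrans c1 (esym c0)) nI.
  rewrite inE => /andP[kI0 kI1].
  have jk : j != k by apply: contraNneq kI0 => <-.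
  have TG := G_Tf jk PG.
  have T0 : Tf j k r P != 0.
    apply/eqP => /ffunP/(_ (sw j k I0)); rewrite !ffunE.
    case/andP: (@sw_in j k I0 jk) => -> ->; rewrite card_sw // c0 eqxx /=.
    by rewrite sw_inv //; apply/eqP.
  apply: (IH _ _ TG T0).
    have sub : sw k j @: supp (Tf j k r P) \subset supp P :\ I1.
      apply/subsetP => V /imsetP[U]; rewrite in_supp ffunE => HU ->; rewrite !inE.
      move: HU; case: ifP => [/and3P[_ kU jU] PU|]; last by rewrite eqxx.
      rewrite PU andbT; apply: contraNneq jI1 => <-.
      by case/andP: (@sw_in k j U (ltac:(by rewrite eq_sym))).
    have inj : {in supp (Tf j k r P) &, injective (sw k j)}.
      move=> U1 U2; rewrite !in_supp !ffunE.
      case: ifP => [/and3P[_ k1 j1] _|]; last by rewrite eqxx.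
      case: ifP => [/and3P[_ k2 j2] _|]; last by rewrite eqxx.
      have kj : k != j by rewrite eq_sym.
      by move=> E; rewrite -(sw_inv kj k1 j1) -(sw_inv kj k2 j2) E.
    have := subset_leq_card sub; rewrite card_in_imset //.
    move=> le; rewrite -ltnS; apply: (leq_trans _ Hn).
    by rewrite (cardsD1 I1 (supp P)) in_supp I1P add1n ltnS.
exists I0; suff -> : mono I0 = P by [].
apply/ffunP => U; rewrite ffunE.
case: (eqVneq U I0) => [->|nU]; first by rewrite (F2_neq0 I0P).
apply/esym/eqP; apply: contraNT H => PU; apply/existsP; exists U; by rewrite PU nU.
Qed.


Lemma G_mono_card (I : {set 'I_m}) : mono I \in G -> #|I| = r.
Proof. by move=> IG; apply: (supp_card IG); rewrite ffunE eqxx oner_neq0. Qed.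

Lemma all_mono (I J : {set 'I_m}) : mono I \in G -> #|J| = r -> mono J \in G.
Proof.
move=> IG cJ; move: {2}#|I :\: J| (leqnn #|I :\: J|) => n.
elim: n I IG => [|n IH] I IG Hn.
  have cI := G_mono_card IG.
  have : I == J by rewrite eqEcard -setD_eq0 -cards_eq0 -leqn0 Hn cI cJ leqnn.
  by move/eqP <-.
case: (eqVneq I J) => [E| nIJ]; first by rewrite -E.
have cI := G_mono_card IG.
have [j] := diff_ne (etrans cI (esym cJ)) nIJ; rewrite inE => /andP[jJ jI].
have nJI : J != I by rewrite eq_sym.
have [k] := diff_ne (etrans cJ (esym cI)) nJI; rewrite inE => /andP[kI kJ].
have jk : j != k by apply: contraNneq jJ => ->.
have := G_Tf jk IG; rewrite Tf_mono // => IG'.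
apply: (IH _ IG').
have -> : sw j k I :\: J = (I :\: J) :\ j.
  apply/setP => x; rewrite /sw !inE; case: (eqVneq x k) => [->|_]; rewrite ?kJ /= ?andbF //.
  by rewrite orbF; case: (x \in J); case: (x \in I); case: (x != j).
by move: Hn; rewrite (cardsD1 j (I :\: J)) inE jJ jI add1n ltnS.
Qed.

Lemma G_full : (exists P, P \in G /\ P != 0) -> G = Fmr m r.
Proof.
case=> P0 [P0G P00]; have [I0 I0G] := ex_mono P0G P00.
have cI0 := G_mono_card I0G.
apply/setP => P; apply/idP/idP; first by case: HG => /subsetP H _ _ /H.
rewrite inE => HP.
have -> : P = \sum_(U in supp P) mono U.
  apply/ffunP => V; rewrite sum_ffunE.
  case: (boolP (V \in supp P)) => VS.
    rewrite (bigD1 V) //= ffunE eqxx big1 ?addr0.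
      by apply: F2_neq0; rewrite -in_supp.
    by move=> U /andP[_ nU]; rewrite ffunE eq_sym (negbTE nU).
  rewrite big1; first by move: VS; rewrite in_supp negbK => /eqP.
  by move=> U US; rewrite ffunE; case: eqP => // E; move: VS; rewrite E US.
apply: (big_ind (fun Q : mlpoly m => Q \in G)); first by case: HG.
  exact: G_add.
move=> U; rewrite in_supp => PU; apply: (all_mono I0G).
apply/eqP; move/forallP: HP => /(_ U) /implyP H; apply: contraNT PU => /H.
by [].
Qed.
End Main.
End S.

Theorem claim6p5 (m r : nat) (G : {set mlpoly m}) :
  (1 <= m)%N -> (r <= m)%N ->
  subspace_of_Fmr r G ->
  (forall (A : 'M['F_2]_m) (b : 'cV['F_2]_m), A \in unitmx ->
     [set piAb r A b P | P in G] = G) ->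
  G = [set (0 : mlpoly m)] \/ G = Fmr m r.
Proof.
move=> _ _ HG Hsym.
case: (boolP [exists P : mlpoly m, (P \in G) && (P != 0)]) => [/existsP[P /andP[PG P0]]|H].
  by right; apply: (G_full HG Hsym); exists P; split.
left; apply/setP => P; rewrite inE; apply/idP/idP.
  move=> PG; apply: contraNT H => P0; apply/existsP; exists P; by rewrite PG P0.
by move/eqP ->; case: HG.
Qed.
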